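(* For a unital algebra $A$ over a field $k$, there is a bijective correspondence between weak bialgebra structures on $A$ and weak multiplier bialgebra structures on $A$.
   Context: For a unital algebra $A$ one has $\mathbb M(A)=A$ and $\mathbb M(A\otimes A)=A\otimes A$. A weak bialgebra structure on a unital $k$-algebra $A$ is a coassociative, counital coalgebra structure $(\Delta,\epsilon)$ with multiplicative $\Delta:A\to A\otimes A$, such that $(\Delta\otimes\mathrm{id})\Delta(1)=(\Delta(1)\otimes1)(1\otimes\Delta(1))=(1\otimes\Delta(1))(\Delta(1)\otimes1)$ and $\epsilon(abc)=(\epsilon\otimes\epsilon)((a\otimes1)\Delta(b)(1\otimes c))=(\epsilon\otimes\epsilon)((a\otimes1)\Delta^{\mathrm{op}}(b)(1\otimes c))$ for all $a,b,c$, where $\Delta^{\mathrm{op}}=\mathsf{tw}\circ\Delta$ and $\mathsf{tw}(a\otimes b)=b\otimes a$. A weak multiplier bialgebra over $k$ is an idempotent algebra $A$ (i.e. $\mu:A\otimes A\to A$ surjective) with non-degenerate multiplication (($ab=0\ \forall a$)$\Rightarrow b=0$ and ($ba=0\ \forall a$)$\Rightarrow b=0$), with multiplier algebra $\mathbb M(A)$ (pairs $(\lambda,\rho)$ of linear maps $A\to A$ with $a\lambda(b)=\rho(a)b$, containing $A$ as a dense ideal; $A\otimes A\subseteq\mathbb M(A\otimes A)$), together with an idempotent $E\in\mathbb M(A\otimes A)$, a multiplicative linear $\Delta:A\to\mathbb M(A\otimes A)$ and a linear $\epsilon:A\to k$ such that: (i) $T_1(a\otimes b):=\Delta(a)(1\otimes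 b)$ and $T_2(a\otimes b):=(a\otimes1)\Delta(b)$ lie in $A\otimes A$; (ii) $(T_2\otimes\mathrm{id})(\mathrm{id}\otimes T_1)=(\mathrm{id}\otimes T_1)(T_2\otimes\mathrm{id})$; (iii) $(\epsilon\otimes\mathrm{id})T_1=\mu=(\mathrm{id}\otimes\epsilon)T_2$; (iv) $\langle\Delta(a)(b\otimes b')\rangle=\langle E(b\otimes b')\rangle$ and $\langle(b\otimes b')\Delta(a)\rangle=\langle(b\otimes b')E\rangle$ (linear spans over $a,b,b'\in A$); (v) $(E\otimes1)(1\otimes E)=E^{(3)}=(1\otimes E)(E\otimes1)$ where $E^{(3)}:=(\overline{\mathrm{id}\otimes\Delta})(E)=(\overline{\Delta\otimes\mathrm{id}})(E)$, with $\overline{\ \cdot\ }$ denoting the unique multiplicative extensions to multiplier algebras sending $1$ to the idempotent $E$ (resp. its appropriate leg), which exist by (iv); (vi) $(\epsilon\otimes\mathrm{id})((1\otimes a)E(b\otimes c))=(\epsilon\otimes\mathrm{id})(\Delta(a)(b\otimes c))$ and $(\epsilon\otimes\mathrm{id})((a\otimes b)E(1\otimes c))=(\epsilon\otimes\mathrm{id})((a\otimes b)\Delta(c))$ for all $a,b,c\in A$. *)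

(* Defs.v *)
(* Tensor products A (x) A and A (x) A (x) A over the field k
   are represented by formal sums (finite lists of pure tensors) together with
   the equality of the tensor product, characterised by its universal property:
   two formal sums are equal in A (x) A iff every k-bilinear map (into any
   k-vector space) takes the same value on them (similarly for trilinear maps
   and A (x) A (x) A).  Scalars are absorbed into the first tensor factor. *)
From HB Require Import structures.
From mathcomp Require Import all_boot all_order all_algebra.
Set Implicit Arguments. Unset Strict Implicit. Unset Printing Implicit Defensive.
Import GRing.Theory.
Local Open Scope ring_scope.

Section Tensors.
Variables (k : fieldType) (A : algType k).

Definition tens2 := seq (A * A).
Definition tens3 := seq (A * A * A).

Definition bilinear2 (U : lmodType k) (b : A -> A -> U) : Prop :=
  (forall a (c : k) x y, b a (c *: x + y) = c *: b a x + b a y) /\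
  (forall a (c : k) x y, b (c *: x + y) a = c *: b x a + b y a).

Definition trilinear3 (U : lmodType k) (b : A -> A -> A -> U) : Prop :=
  (forall a1 a2 (c : k) x y, b a1 a2 (c *: x + y) = c *: b a1 a2 x + b a1 a2 y) /\
  (forall a1 a3 (c : k) x y, b a1 (c *: x + y) a3 = c *: b a1 x a3 + b a1 y a3) /\
  (forall a2 a3 (c : k) x y, b (c *: x + y) a2 a3 = c *: b x a2 a3 + b y a2 a3).

Definition teq2 (s t : tens2) : Prop :=
  forall (U : lmodType k) (b : A -> A -> U), bilinear2 b ->
    \sum_(p <- s) b p.1 p.2 = \sum_(p <- t) b p.1 p.2.

Definition teq3 (s t : tens3) : Prop :=
  forall (U : lmodType k) (b : A -> A -> A -> U), trilinear3 b ->
    \sum_(p <- s) b p.1.1 p.1.2 p.2 = \sum_(p <- t) b p.1.1 p.1.2 p.2.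

Definition tpure2 (a b : A) : tens2 := [:: (a, b)].
Definition tscale2 (c : k) (s : tens2) : tens2 := [seq (c *: p.1, p.2) | p <- s].
Definition tmul2 (s t : tens2) : tens2 :=
  [seq (x.1 * y.1, x.2 * y.2) | x <- s, y <- t].
Definition tmul3 (s t : tens3) : tens3 :=
  [seq (x.1.1 * y.1.1, x.1.2 * y.1.2, x.2 * y.2) | x <- s, y <- t].
Definition ttw (s : tens2) : tens2 := [seq (p.2, p.1) | p <- s].
Definition tleft1 (s : tens2) : tens3 := [seq (p.1, p.2, 1) | p <- s].
Definition tright1 (s : tens2) : tens3 := [seq (1, p.1, p.2) | p <- s].

Definition tmu (s : tens2) : A := \sum_(p <- s) p.1 * p.2.

Definition DeltaId (D : A -> tens2) (s : tens2) : tens3 :=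
  flatten [seq [seq (x.1, x.2, p.2) | x <- D p.1] | p <- s].
Definition IdDelta (D : A -> tens2) (s : tens2) : tens3 :=
  flatten [seq [seq (p.1, x.1, x.2) | x <- D p.2] | p <- s].
Definition epsId (e : A -> k) (s : tens2) : A := \sum_(p <- s) e p.1 *: p.2.
Definition idEps (e : A -> k) (s : tens2) : A := \sum_(p <- s) e p.2 *: p.1.
Definition epsEps (e : A -> k) (s : tens2) : k := \sum_(p <- s) e p.1 * e p.2.

Definition T1 (D : A -> tens2) (s : tens2) : tens2 :=
  flatten [seq tmul2 (D p.1) (tpure2 1 p.2) | p <- s].
Definition T2 (D : A -> tens2) (s : tens2) : tens2 :=
  flatten [seq tmul2 (tpure2 p.1 1) (D p.2) | p <- s].
Definition idT1 (D : A -> tens2) (t : tens3) : tens3 :=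
  flatten [seq [seq (p.1.1, x.1, x.2) | x <- T1 D (tpure2 p.1.2 p.2)] | p <- t].
Definition T2id (D : A -> tens2) (t : tens3) : tens3 :=
  flatten [seq [seq (x.1, x.2, p.2) | x <- T2 D (tpure2 p.1.1 p.1.2)] | p <- t].

Definition inspan2 (X : Type) (g : X -> tens2) (t : tens2) : Prop :=
  exists l : seq (k * X), teq2 t (flatten [seq tscale2 q.1 (g q.2) | q <- l]).

Definition linear_tens (D : A -> tens2) : Prop :=
  forall (c : k) a b, teq2 (D (c *: a + b)) (tscale2 c (D a) ++ D b).
Definition linear_scal (e : A -> k) : Prop :=
  forall (c : k) a b, e (c *: a + b) = c * e a + e b.
Definition multiplicative_tens (D : A -> tens2) : Prop :=
  forall a b, teq2 (D (a * b)) (tmul2 (D a) (D b)).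

Record is_weak_bialgebra (D : A -> tens2) (e : A -> k) : Prop := {
  wb_Dlin : linear_tens D;
  wb_elin : linear_scal e;
  wb_coassoc : forall a, teq3 (DeltaId D (D a)) (IdDelta D (D a));
  wb_counitl : forall a, epsId e (D a) = a;
  wb_counitr : forall a, idEps e (D a) = a;
  wb_mult : multiplicative_tens D;
  wb_unit1 : teq3 (DeltaId D (D 1)) (tmul3 (tleft1 (D 1)) (tright1 (D 1)));
  wb_unit2 : teq3 (DeltaId D (D 1)) (tmul3 (tright1 (D 1)) (tleft1 (D 1)));
  wb_counit1 : forall a b c, e (a * b * c) =
     epsEps e (tmul2 (tmul2 (tpure2 a 1) (D b)) (tpure2 1 c));
  wb_counit2 : forall a b c, e (a * b * c) =
     epsEps e (tmul2 (tmul2 (tpure2 a 1) (ttw (D b))) (tpure2 1 c))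
}.

(* weak multiplier bialgebra structure (E, D, e) on A; since A is unital,
   M(A) = A and M(A (x) A) = A (x) A, so E is an element of A (x) A and D maps
   A to A (x) A; the multiplicative extensions of id (x) D and D (x) id to
   M(A (x) A) = A (x) A are id (x) D and D (x) id themselves. *)
Record is_weak_multiplier_bialgebra (E : tens2) (D : A -> tens2) (e : A -> k)
  : Prop := {
  wm_idempotent : forall a : A, exists s : tens2, a = tmu s;
  wm_nondeg_l : forall b : A, (forall a, a * b = 0) -> b = 0;
  wm_nondeg_r : forall b : A, (forall a, b * a = 0) -> b = 0;
  wm_Eidem : teq2 (tmul2 E E) E;
  wm_Dlin : linear_tens D;
  wm_Dmult : multiplicative_tens D;
  wm_elin : linear_scal e;
  (* (i) holds automatically: T1, T2 map A (x) A to A (x) A by construction *)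
  wm_T : forall t : tens3, teq3 (T2id D (idT1 D t)) (idT1 D (T2id D t));
  wm_counitl : forall s : tens2, epsId e (T1 D s) = tmu s;
  wm_counitr : forall s : tens2, idEps e (T2 D s) = tmu s;
  wm_span_l : forall t : tens2,
    inspan2 (fun x : A * A * A => tmul2 (D x.1.1) (tpure2 x.1.2 x.2)) t <->
    inspan2 (fun x : A * A => tmul2 E (tpure2 x.1 x.2)) t;
  wm_span_r : forall t : tens2,
    inspan2 (fun x : A * A * A => tmul2 (tpure2 x.1.2 x.2) (D x.1.1)) t <->
    inspan2 (fun x : A * A => tmul2 (tpure2 x.1 x.2) E) t;
  (* (v), with E^(3) = (id (x) D)(E) = (D (x) id)(E) *)
  wm_E3 : teq3 (IdDelta D E) (DeltaId D E);
  wm_E3l : teq3 (tmul3 (tleft1 E) (tright1 E)) (IdDelta D E);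
  wm_E3r : teq3 (tmul3 (tright1 E) (tleft1 E)) (IdDelta D E);
  wm_eps1 : forall a b c,
    epsId e (tmul2 (tmul2 (tpure2 1 a) E) (tpure2 b c)) =
    epsId e (tmul2 (D a) (tpure2 b c));
  wm_eps2 : forall a b c,
    epsId e (tmul2 (tmul2 (tpure2 a b) E) (tpure2 1 c)) =
    epsId e (tmul2 (tpure2 a b) (D c))
}.

End Tensors.

(* Main.v *)
Require Import Defs.
From HB Require Import structures.
From mathcomp Require Import all_boot all_order all_algebra.
Set Implicit Arguments. Unset Strict Implicit. Unset Printing Implicit Defensive.
Import GRing.Theory.
Local Open Scope ring_scope.

Section Infra.
Variables (k : fieldType) (A : algType k).
Implicit Types (s t : tens2 A) (a b : A).

Definition ev2 (U : lmodType k) (B : A -> A -> U) (s : tens2 A) :=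
  \sum_(p <- s) B p.1 p.2.
Definition ev3 (U : lmodType k) (B : A -> A -> A -> U) (s : tens3 A) :=
  \sum_(p <- s) B p.1.1 p.1.2 p.2.
Definition lin (V : lmodType k) (f : A -> V) :=
  forall (c : k) x y, f (c *: x + y) = c *: f x + f y.

Section Ev.
Variable U : lmodType k.

Lemma ev2_cat (B : A -> A -> U) s t : ev2 B (s ++ t) = ev2 B s + ev2 B t.
Proof. by rewrite /ev2 big_cat. Qed.
Lemma ev2_nil (B : A -> A -> U) : ev2 B [::] = 0.
Proof. by rewrite /ev2 big_nil. Qed.
Lemma ev2_flatten (B : A -> A -> U) L :
  ev2 B (flatten L) = \sum_(s <- L) ev2 B s.
Proof. by rewrite /ev2 big_flatten. Qed.
Lemma ev2_map X (B : A -> A -> U) (f : X -> A * A) r :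
  ev2 B (map f r) = \sum_(x <- r) B (f x).1 (f x).2.
Proof. by rewrite /ev2 big_map. Qed.
Lemma ev2_tmul2 (B : A -> A -> U) s t :
  ev2 B (tmul2 s t) = \sum_(x <- s) \sum_(y <- t) B (x.1 * y.1) (x.2 * y.2).
Proof. by rewrite /ev2 /tmul2 big_allpairs_dep. Qed.
Lemma ev2_pure (B : A -> A -> U) a b : ev2 B (tpure2 a b) = B a b.
Proof. by rewrite /ev2 big_seq1. Qed.
Lemma ev2_ttw (B : A -> A -> U) s : ev2 B (ttw s) = ev2 (fun x y => B y x) s.
Proof. by rewrite /ev2 big_map. Qed.
Lemma lin_lin0 (V : lmodType k) (f : A -> V) : lin f -> f 0 = 0.
Proof.
move=> Hf; have := Hf 1 0 0; rewrite scaler0 addr0 scale1r => H.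
by apply: (addrI (f 0)); rewrite addr0 -H.
Qed.
Lemma ev2_tscale (B : A -> A -> U) (c : k) s : bilinear2 B ->
  ev2 B (tscale2 c s) = c *: ev2 B s.
Proof.
move=> [_ HB]; rewrite /ev2 big_map scaler_sumr; apply: eq_bigr => p _.
have H0 : B 0 p.2 = 0 by apply: (lin_lin0 (f := fun x => B x p.2)) => ? ? ?; apply: HB.
by rewrite /= -[c *: p.1]addr0 HB H0 addr0.
Qed.

Lemma ev3_cat (B : A -> A -> A -> U) (s t : tens3 A) : ev3 B (s ++ t) = ev3 B s + ev3 B t.
Proof. by rewrite /ev3 big_cat. Qed.
Lemma ev3_flatten (B : A -> A -> A -> U) L :
  ev3 B (flatten L) = \sum_(s <- L) ev3 B s.
Proof. by rewrite /ev3 big_flatten. Qed.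
Lemma ev3_map X (B : A -> A -> A -> U) (f : X -> A * A * A) r :
  ev3 B (map f r) = \sum_(x <- r) B (f x).1.1 (f x).1.2 (f x).2.
Proof. by rewrite /ev3 big_map. Qed.
Lemma ev3_tmul3 (B : A -> A -> A -> U) (s t : tens3 A) :
  ev3 B (tmul3 s t) = \sum_(x <- s) \sum_(y <- t)
     B (x.1.1 * y.1.1) (x.1.2 * y.1.2) (x.2 * y.2).
Proof. by rewrite /ev3 /tmul3 big_allpairs_dep. Qed.

End Ev.

Lemma lin_mull a : lin (fun x : A => a * x).
Proof. by move=> c x y; rewrite mulrDr scalerAr. Qed.
Lemma lin_mulr a : lin (fun x : A => x * a).
Proof. by move=> c x y; rewrite mulrDl scalerAl. Qed.
Lemma lin_id : lin (fun x : A => x).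
Proof. by []. Qed.

Lemma bil_comp (U : lmodType k) (B : A -> A -> U) (f g : A -> A) :
  bilinear2 B -> lin f -> lin g -> bilinear2 (fun x y => B (f x) (g y)).
Proof.
move=> [H1 H2] Hf Hg; split=> a0 c x y /=; first by rewrite Hg H1.
by rewrite Hf H2.
Qed.

Lemma bil_sum (U : lmodType k) X (r : seq X) (F : X -> A -> A -> U) :
  (forall x, bilinear2 (F x)) -> bilinear2 (fun y z => \sum_(x <- r) F x y z).
Proof.
move=> HF; split=> a0 c x y.
  rewrite scaler_sumr -big_split; apply: eq_bigr => i _; by case: (HF i) => ->.
rewrite scaler_sumr -big_split; apply: eq_bigr => i _; by case: (HF i) => _ ->.
Qed.

Lemma bil_ev2 (U : lmodType k) X (F : X -> A -> A -> U) (s : seq X) :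
  (forall x, bilinear2 (F x)) -> bilinear2 (fun y z => \sum_(x <- s) F x y z).
Proof. exact: bil_sum. Qed.


Lemma tri_comp (U : lmodType k) (B : A -> A -> A -> U) (f g h : A -> A) :
  trilinear3 B -> lin f -> lin g -> lin h ->
  trilinear3 (fun x y z => B (f x) (g y) (h z)).
Proof.
move=> [H1 [H2 H3]] Hf Hg Hh; split; last split => a0 a1 c x y /=.
- by move=> a0 a1 c x y /=; rewrite Hh H1.
- by rewrite Hg H2.
- by rewrite Hf H3.
Qed.

Lemma tri_bil12 (U : lmodType k) (B : A -> A -> A -> U) z :
  trilinear3 B -> bilinear2 (fun x y => B x y z).
Proof. by move=> [H1 [H2 H3]]; split => *; rewrite ?H2 ?H3. Qed.
Lemma tri_bil23 (U : lmodType k) (B : A -> A -> A -> U) x :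
  trilinear3 B -> bilinear2 (fun y z => B x y z).
Proof. by move=> [H1 [H2 H3]]; split => *; rewrite ?H1 ?H2. Qed.
Lemma tri_bil13 (U : lmodType k) (B : A -> A -> A -> U) y :
  trilinear3 B -> bilinear2 (fun x z => B x y z).
Proof. by move=> [H1 [H2 H3]]; split => *; rewrite ?H1 ?H3. Qed.
Lemma tri_lin3 (U : lmodType k) (B : A -> A -> A -> U) x y :
  trilinear3 B -> lin (B x y).
Proof. by move=> [H1 [H2 H3]] ? ? ?; rewrite H1. Qed.
Lemma bil_lin2 (U : lmodType k) (B : A -> A -> U) x :
  bilinear2 B -> lin (B x).
Proof. by move=> [H1 H2] ? ? ?; rewrite H1. Qed.
Lemma bil_lin1 (U : lmodType k) (B : A -> A -> U) y :
  bilinear2 B -> lin (B^~ y).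
Proof. by move=> [H1 H2] ? ? ?; rewrite H2. Qed.

Lemma lin_sum (V : lmodType k) X (r : seq X) (F : X -> A -> V) :
  (forall x, lin (F x)) -> lin (fun y => \sum_(x <- r) F x y).
Proof.
move=> HF c x y; rewrite scaler_sumr -big_split; apply: eq_bigr => i _; exact: HF.
Qed.

Lemma bil_of_lin (U : lmodType k) (B : A -> A -> U) :
  (forall x, lin (B x)) -> (forall y, lin (B^~ y)) -> bilinear2 B.
Proof. by move=> H1 H2; split => *; [apply: H1 | apply: (H2 _)]. Qed.

Lemma tri_of_lin (U : lmodType k) (B : A -> A -> A -> U) :
  (forall x y, lin (B x y)) -> (forall x z, lin (B x ^~ z)) ->
  (forall y z, lin (fun x => B x y z)) -> trilinear3 B.
Proof.
by move=> H1 H2 H3; split; [|split] => *; [apply: H1|apply: (H2 _ _)|apply: (H3 _ _)].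
Qed.

Lemma lin_comp (V : lmodType k) (f : A -> V) (g : A -> A) :
  lin f -> lin g -> lin (fun x => f (g x)).
Proof. by move=> Hf Hg c x y; rewrite Hg Hf. Qed.

Lemma lin_scale (V : lmodType k) (f : A -> V) (c0 : k) : lin f -> lin (fun x => c0 *: f x).
Proof. by move=> Hf c x y; rewrite Hf scalerDr !scalerA mulrC. Qed.

Lemma lin_scal_fun (V : lmodType k) (e : A -> k) (v : V) :
  linear_scal e -> lin (fun x => e x *: v).
Proof. by move=> He c x y; rewrite He scalerDl scalerA. Qed.

Lemma teq2_refl s : teq2 s s. Proof. by []. Qed.
Lemma teq2_sym s t : teq2 s t -> teq2 t s.
Proof. by move=> H U B HB; rewrite H. Qed.
Lemma teq2_trans s t r : teq2 s t -> teq2 t r -> teq2 s r.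
Proof. by move=> H1 H2 U B HB; rewrite H1 ?H2. Qed.
Lemma teq3_refl (s : tens3 A) : teq3 s s. Proof. by []. Qed.
Lemma teq3_sym (s t : tens3 A) : teq3 s t -> teq3 t s.
Proof. by move=> H U B HB; rewrite H. Qed.
Lemma teq3_trans (s t r : tens3 A) : teq3 s t -> teq3 t r -> teq3 s r.
Proof. by move=> H1 H2 U B HB; rewrite H1 ?H2. Qed.

Lemma teq2E s t : teq2 s t ->
  forall (U : lmodType k) (B : A -> A -> U), bilinear2 B -> ev2 B s = ev2 B t.
Proof. exact. Qed.
Lemma teq3E (s t : tens3 A) : teq3 s t ->
  forall (U : lmodType k) (B : A -> A -> A -> U), trilinear3 B -> ev3 B s = ev3 B t.
Proof. exact. Qed.

Lemma teq2I s t :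
  (forall (U : lmodType k) (B : A -> A -> U), bilinear2 B -> ev2 B s = ev2 B t) ->
  teq2 s t.
Proof. exact. Qed.
Lemma teq3I (s t : tens3 A) :
  (forall (U : lmodType k) (B : A -> A -> A -> U), trilinear3 B -> ev3 B s = ev3 B t) ->
  teq3 s t.
Proof. exact. Qed.

Lemma ev2_tmul2_l (U : lmodType k) (B : A -> A -> U) s t :
  ev2 B (tmul2 s t) = ev2 (fun u v => ev2 (fun x y => B (x * u) (y * v)) s) t.
Proof. by rewrite ev2_tmul2 /ev2 exchange_big. Qed.
Lemma ev2_tmul2_r (U : lmodType k) (B : A -> A -> U) s t :
  ev2 B (tmul2 s t) = ev2 (fun u v => ev2 (fun x y => B (u * x) (v * y)) t) s.
Proof. by rewrite ev2_tmul2. Qed.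

Lemma bil_lmul (U : lmodType k) (B : A -> A -> U) s : bilinear2 B ->
  bilinear2 (fun u v => ev2 (fun x y => B (x * u) (y * v)) s).
Proof.
move=> HB; apply: bil_sum => p; apply: bil_comp => //; exact: lin_mull.
Qed.
Lemma bil_rmul (U : lmodType k) (B : A -> A -> U) s : bilinear2 B ->
  bilinear2 (fun u v => ev2 (fun x y => B (u * x) (v * y)) s).
Proof.
move=> HB; apply: bil_sum => p; apply: bil_comp => //; exact: lin_mulr.
Qed.

Lemma tmul2_congr s s' t t' : teq2 s s' -> teq2 t t' ->
  teq2 (tmul2 s t) (tmul2 s' t').
Proof.
move=> Hs Ht; apply: teq2I => U B HB.
rewrite ev2_tmul2_r (teq2E Hs); last exact: bil_rmul.
rewrite -ev2_tmul2_r ev2_tmul2_l (teq2E Ht); last exact: bil_lmul.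
by rewrite -ev2_tmul2_l.
Qed.

Lemma tmul2_assoc s t r :
  teq2 (tmul2 (tmul2 s t) r) (tmul2 s (tmul2 t r)).
Proof.
apply: teq2I => U B HB; rewrite !ev2_tmul2 /tmul2 big_allpairs_dep.
apply: eq_bigr => x _; rewrite big_allpairs_dep; apply: eq_bigr => y _.
by apply: eq_bigr => z _ /=; rewrite !mulrA.
Qed.

Section WithD.
Variable (D : A -> tens2 A).
Hypothesis HD : linear_tens D.

Lemma evD_lin (U : lmodType k) (C : A -> A -> U) : bilinear2 C ->
  lin (fun a => ev2 C (D a)).
Proof.
move=> HC c x y; rewrite (teq2E (HD c x y) HC) ev2_cat ev2_tscale //.
Qed.

Lemma ev3_DeltaId (U : lmodType k) (B : A -> A -> A -> U) s :
  ev3 B (DeltaId D s) = ev2 (fun u v => ev2 (fun x y => B x y v) (D u)) s.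
Proof.
by rewrite /DeltaId ev3_flatten big_map; apply: eq_bigr => p _; rewrite ev3_map.
Qed.
Lemma ev3_IdDelta (U : lmodType k) (B : A -> A -> A -> U) s :
  ev3 B (IdDelta D s) = ev2 (fun u v => ev2 (fun x y => B u x y) (D v)) s.
Proof.
by rewrite /IdDelta ev3_flatten big_map; apply: eq_bigr => p _; rewrite ev3_map.
Qed.

Lemma bil_DeltaId (U : lmodType k) (B : A -> A -> A -> U) : trilinear3 B ->
  bilinear2 (fun u v => ev2 (fun x y => B x y v) (D u)).
Proof.
move=> HB; apply: bil_of_lin => [u|v].
  by apply: lin_sum => p; apply: tri_lin3.
by apply: evD_lin; apply: tri_bil12.
Qed.
Lemma bil_IdDelta (U : lmodType k) (B : A -> A -> A -> U) : trilinear3 B ->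
  bilinear2 (fun u v => ev2 (fun x y => B u x y) (D v)).
Proof.
move=> HB; apply: bil_of_lin => [u|v].
  by apply: evD_lin; apply: tri_bil23.
by apply: lin_sum => p; case: HB => _ [_ H3] c x y; rewrite H3.
Qed.

Lemma DeltaId_congr s s' : teq2 s s' -> teq3 (DeltaId D s) (DeltaId D s').
Proof.
move=> H; apply: teq3I => U B HB; rewrite !ev3_DeltaId (teq2E H) //.
exact: bil_DeltaId.
Qed.
Lemma IdDelta_congr s s' : teq2 s s' -> teq3 (IdDelta D s) (IdDelta D s').
Proof.
move=> H; apply: teq3I => U B HB; rewrite !ev3_IdDelta (teq2E H) //.
exact: bil_IdDelta.
Qed.

Lemma ev2_T1 (U : lmodType k) (B : A -> A -> U) s :
  ev2 B (T1 D s) = ev2 (fun u v => ev2 (fun x y => B (x * 1) (y * v)) (D u)) s.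
Proof.
rewrite /T1 ev2_flatten big_map; apply: eq_bigr => p _.
by rewrite ev2_tmul2; apply: eq_bigr => x _; rewrite big_seq1.
Qed.
Lemma ev2_T2 (U : lmodType k) (B : A -> A -> U) s :
  ev2 B (T2 D s) = ev2 (fun u v => ev2 (fun x y => B (u * x) (1 * y)) (D v)) s.
Proof.
by rewrite /T2 ev2_flatten big_map; apply: eq_bigr => p _; rewrite ev2_tmul2 big_seq1.
Qed.
End WithD.

Lemma ev3_lr (U : lmodType k) (B : A -> A -> A -> U) s t :
  ev3 B (tmul3 (tleft1 s) (tright1 t)) =
  ev2 (fun u v => ev2 (fun p q => B (u * 1) (v * p) (1 * q)) t) s.
Proof.
rewrite ev3_tmul3 /tleft1 big_map; apply: eq_bigr => x _.
by rewrite /tright1 big_map.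
Qed.
Lemma ev3_rl (U : lmodType k) (B : A -> A -> A -> U) s t :
  ev3 B (tmul3 (tright1 s) (tleft1 t)) =
  ev2 (fun u v => ev2 (fun p q => B (1 * p) (u * q) (v * 1)) t) s.
Proof.
rewrite ev3_tmul3 /tright1 big_map; apply: eq_bigr => x _.
by rewrite /tleft1 big_map.
Qed.

Lemma ev3_lr2 (U : lmodType k) (B : A -> A -> A -> U) s t :
  ev3 B (tmul3 (tleft1 s) (tright1 t)) =
  ev2 (fun p q => ev2 (fun u v => B (u * 1) (v * p) (1 * q)) s) t.
Proof. by rewrite ev3_lr /ev2 exchange_big. Qed.
Lemma ev3_rl2 (U : lmodType k) (B : A -> A -> A -> U) s t :
  ev3 B (tmul3 (tright1 s) (tleft1 t)) =
  ev2 (fun p q => ev2 (fun u v => B (1 * p) (u * q) (v * 1)) s) t.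
Proof. by rewrite ev3_rl /ev2 exchange_big. Qed.

Lemma lr_congr s s' t t' : teq2 s s' -> teq2 t t' ->
  teq3 (tmul3 (tleft1 s) (tright1 t)) (tmul3 (tleft1 s') (tright1 t')).
Proof.
move=> Hs Ht; apply: teq3I => U B HB.
have HB1 := HB; case: HB1 => [H1 [H2 H3]].
transitivity (ev3 B (tmul3 (tleft1 s') (tright1 t))).
  rewrite !ev3_lr (teq2E Hs) //.
  apply: bil_of_lin => [u|v]; apply: lin_sum => p.
    by apply: (lin_comp (f := fun x => B (u * 1) x (1 * p.2))); [move=> ? ? ?; rewrite H2| exact: lin_mulr].
  by apply: (lin_comp (f := fun x => B x (v * p.1) (1 * p.2))); [move=> ? ? ?; rewrite H3| exact: lin_mulr].
rewrite !ev3_lr2 (teq2E Ht) //.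
apply: bil_sum => x; apply: (bil_comp (B := fun y z => B (x.1 * 1) y z)); [exact: tri_bil23 | exact: lin_mull | exact: lin_mull].
Qed.

Lemma rl_congr s s' t t' : teq2 s s' -> teq2 t t' ->
  teq3 (tmul3 (tright1 s) (tleft1 t)) (tmul3 (tright1 s') (tleft1 t')).
Proof.
move=> Hs Ht; apply: teq3I => U B HB.
have HB1 := HB; case: HB1 => [H1 [H2 H3]].
transitivity (ev3 B (tmul3 (tright1 s') (tleft1 t))).
  rewrite !ev3_rl (teq2E Hs) //.
  apply: bil_of_lin => [u|v]; apply: lin_sum => p.
    by apply: (lin_comp (f := fun x => B (1 * p.1) (u * p.2) x)); [exact: tri_lin3| exact: lin_mulr].
  by apply: (lin_comp (f := fun x => B (1 * p.1) x (v * 1))); [move=> ? ? ?; rewrite H2| exact: lin_mulr].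
rewrite !ev3_rl2 (teq2E Ht) //.
apply: bil_sum => x; apply: (bil_comp (B := fun y z => B y z (x.2 * 1))); [exact: tri_bil12 | exact: lin_mull | exact: lin_mull].
Qed.
End Infra.

Section Main.
Variables (k : fieldType) (A : algType k).
Implicit Types (s t : tens2 A) (a b : A).

Section Eps.
Variable e : A -> k.
Hypothesis He : linear_scal e.
Lemma e0 : e 0 = 0.
Proof. by have := He 1 0 0; rewrite scaler0 addr0 mul1r => H; apply: (addrI (e 0)); rewrite addr0 -H. Qed.
Lemma eD x y : e (x + y) = e x + e y.
Proof. by have := He 1 x y; rewrite scale1r mul1r. Qed.
Lemma eZ (c : k) x : e (c *: x) = c * e x.
Proof. by have := He c x 0; rewrite addr0 e0 addr0. Qed.
Lemma e_sum X (r : seq X) (F : X -> A) : e (\sum_(i <- r) F i) = \sum_(i <- r) e (F i).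
Proof.
elim: r => [|x r IH]; first by rewrite !big_nil e0.
by rewrite !big_cons eD IH.
Qed.
Lemma bil_eps : bilinear2 (fun x y : A => e x *: y).
Proof.
split=> a0 c x y; first by rewrite scalerDr !scalerA mulrC.
by rewrite He scalerDl scalerA.
Qed.
Lemma bil_epsr : bilinear2 (fun x y : A => e y *: x).
Proof.
split=> a0 c x y; first by rewrite He scalerDl scalerA.
by rewrite scalerDr !scalerA mulrC.
Qed.
End Eps.

Lemma ev2_span (U : lmodType k) (B : A -> A -> U) X (g : X -> tens2 A) (l : seq (k * X)) :
  bilinear2 B ->
  ev2 B (flatten [seq tscale2 q.1 (g q.2) | q <- l]) = \sum_(q <- l) q.1 *: ev2 B (g q.2).
Proof.
by move=> HB; rewrite ev2_flatten big_map; apply: eq_bigr => q _; rewrite ev2_tscale.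
Qed.

Lemma span_absorb_l X (g : X -> tens2 A) s t : inspan2 g t ->
  (forall x, teq2 (tmul2 s (g x)) (g x)) -> teq2 (tmul2 s t) t.
Proof.
move=> [l Hl] Hg; apply: teq2_trans (tmul2_congr (teq2_refl s) Hl) _.
apply: teq2_trans (teq2_sym Hl); apply: teq2I => U B HB.
rewrite ev2_tmul2_l ev2_span; last exact: bil_lmul.
rewrite ev2_span //; apply: eq_bigr => q _; rewrite -ev2_tmul2_l.
by rewrite (teq2E (Hg q.2)).
Qed.

Lemma span_absorb_r X (g : X -> tens2 A) s t : inspan2 g t ->
  (forall x, teq2 (tmul2 (g x) s) (g x)) -> teq2 (tmul2 t s) t.
Proof.
move=> [l Hl] Hg; apply: teq2_trans (tmul2_congr Hl (teq2_refl s)) _.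
apply: teq2_trans (teq2_sym Hl); apply: teq2I => U B HB.
rewrite ev2_tmul2_r ev2_span; last exact: bil_rmul.
rewrite ev2_span //; apply: eq_bigr => q _; rewrite -ev2_tmul2_r.
by rewrite (teq2E (Hg q.2)).
Qed.

Lemma tmul2_11 s : teq2 (tmul2 s (tpure2 1 1)) s.
Proof.
apply: teq2I => U B HB; rewrite ev2_tmul2; apply: eq_bigr => x _.
by rewrite big_seq1 !mulr1.
Qed.
Lemma tmul2_11l s : teq2 (tmul2 (tpure2 1 1) s) s.
Proof.
apply: teq2I => U B HB; rewrite ev2_tmul2 big_seq1; apply: eq_bigr => x _.
by rewrite !mul1r.
Qed.

Lemma span1 X (g : X -> tens2 A) t x : teq2 t (g x) -> inspan2 g t.
Proof.
move=> H; exists [:: (1, x)]; apply: teq2_trans H _; apply: teq2I => U B HB.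
by rewrite ev2_span // big_seq1 scale1r.
Qed.


Lemma ev3_idT1 (D : A -> tens2 A) (U : lmodType k) (B : A -> A -> A -> U) (t : tens3 A) :
  ev3 B (idT1 D t) =
  ev3 (fun u v w => ev2 (fun x y => B u x y) (T1 D (tpure2 v w))) t.
Proof.
by rewrite /idT1 ev3_flatten big_map; apply: eq_bigr => p _; rewrite ev3_map.
Qed.
Lemma ev3_T2id (D : A -> tens2 A) (U : lmodType k) (B : A -> A -> A -> U) (t : tens3 A) :
  ev3 B (T2id D t) =
  ev3 (fun u v w => ev2 (fun x y => B x y w) (T2 D (tpure2 u v))) t.
Proof.
by rewrite /T2id ev3_flatten big_map; apply: eq_bigr => p _; rewrite ev3_map.
Qed.

Lemma ev3_seq1 (U : lmodType k) (B : A -> A -> A -> U) (p : A * A * A) :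
  ev3 B [:: p] = B p.1.1 p.1.2 p.2.
Proof. by rewrite /ev3 big_seq1. Qed.

Lemma eq_ev2 (U : lmodType k) (F G : A -> A -> U) s :
  (forall x y, F x y = G x y) -> ev2 F s = ev2 G s.
Proof. by move=> h; apply: eq_bigr => p _; rewrite h. Qed.
Lemma eq_ev3 (U : lmodType k) (F G : A -> A -> A -> U) (s : tens3 A) :
  (forall x y z, F x y z = G x y z) -> ev3 F s = ev3 G s.
Proof. by move=> h; apply: eq_bigr => p _; rewrite h. Qed.

Lemma ev2_pl (U : lmodType k) (B : A -> A -> U) a b s :
  ev2 B (tmul2 (tpure2 a b) s) = ev2 (fun x y => B (a * x) (b * y)) s.
Proof. by rewrite ev2_tmul2 big_seq1. Qed.
Lemma ev2_pr (U : lmodType k) (B : A -> A -> U) a b s :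
  ev2 B (tmul2 s (tpure2 a b)) = ev2 (fun x y => B (x * a) (y * b)) s.
Proof. by rewrite ev2_tmul2; apply: eq_bigr => x _; rewrite big_seq1. Qed.

Lemma phi_ev2 (phi : A -> k) (Hphi : linear_scal phi) (g : A -> A -> k)
  (f : A -> A -> A) s :
  phi (ev2 (fun x y => g x y *: f x y) s) = \sum_(p <- s) g p.1 p.2 * phi (f p.1 p.2).
Proof. by rewrite /ev2 (e_sum Hphi); apply: eq_bigr => p _; rewrite (eZ Hphi). Qed.

Lemma ls_mulr (e : A -> k) c : linear_scal e -> linear_scal (fun u => e (u * c)).
Proof. by move=> He c0 x y; rewrite mulrDl -scalerAl He. Qed.
Lemma ls_mull (e : A -> k) c : linear_scal e -> linear_scal (fun u => e (c * u)).
Proof. by move=> He c0 x y; rewrite mulrDr -scalerAr He. Qed.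

Lemma epsEps_3 (e : A -> k) a b c s :
  epsEps e (tmul2 (tmul2 (tpure2 a b) s) (tpure2 1 c)) =
  \sum_(p <- s) e (a * p.1 * 1) * e (b * p.2 * c).
Proof.
rewrite /epsEps /tmul2 big_allpairs_dep big_allpairs_dep big_seq1.
by apply: eq_bigr => p _; rewrite big_seq1.
Qed.

Section WMtoWB.
Variables (E : tens2 A) (D : A -> tens2 A) (e : A -> k).
Hypothesis H : is_weak_multiplier_bialgebra E D e.

Lemma E_D1 : teq2 E (D 1).
Proof.
have h1 : teq2 (tmul2 (D 1) E) E.
  apply: (span_absorb_l (g := fun x : A * A * A => tmul2 (D x.1.1) (tpure2 x.1.2 x.2))).
    apply/(wm_span_l H); apply: (span1 (x := (1, 1))); exact: teq2_sym (tmul2_11 _).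
  move=> [[a b] b'] /=.
  apply: teq2_trans (teq2_sym (tmul2_assoc _ _ _)) _; apply: tmul2_congr => //.
  by have := wm_Dmult H 1 a; rewrite mul1r => h; exact: teq2_sym h.
have h2 : teq2 (tmul2 (D 1) E) (D 1).
  apply: (span_absorb_r (g := fun x : A * A => tmul2 (tpure2 x.1 x.2) E)).
    apply/(wm_span_r H); apply: (span1 (x := (1, 1, 1))); exact: teq2_sym (tmul2_11l _).
  move=> [b b'] /=; apply: teq2_trans (tmul2_assoc _ _ _) _.
  apply: tmul2_congr => //; exact: wm_Eidem H.
exact: teq2_trans (teq2_sym h1) h2.
Qed.

Lemma wm_cl a : epsId e (D a) = a.
Proof.
have h := wm_counitl H (tpure2 a 1).
change (ev2 (fun x y => e x *: y) (T1 D (tpure2 a 1)) = tmu (tpure2 a 1)) in h.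
rewrite ev2_T1 ev2_pure /tmu big_seq1 mulr1 in h; rewrite -[RHS]h.
by apply: eq_bigr => x _; rewrite !mulr1.
Qed.

Lemma wm_cr a : idEps e (D a) = a.
Proof.
have h := wm_counitr H (tpure2 1 a).
change (ev2 (fun x y => e y *: x) (T2 D (tpure2 1 a)) = tmu (tpure2 1 a)) in h.
rewrite ev2_T2 ev2_pure /tmu big_seq1 mul1r in h; rewrite -[RHS]h.
by apply: eq_bigr => x _; rewrite !mul1r.
Qed.


Lemma wm_coassoc a : teq3 (DeltaId D (D a)) (IdDelta D (D a)).
Proof.
have h := wm_T H [:: (1, a, 1)].
apply: teq3I => U B HB; have := teq3E h HB.
rewrite ev3_T2id ev3_idT1 ev3_idT1 ev3_T2id !ev3_seq1 /= ev2_T1 ev2_T2 !ev2_pure.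
rewrite ev3_DeltaId ev3_IdDelta.
have L1 : forall x y, ev2 (fun x0 => (B x0)^~ (y * 1)) (T2 D (tpure2 1 (x * 1))) =
  ev2 (fun x0 => (B x0)^~ y) (D x).
  move=> x y; rewrite ev2_T2 ev2_pure !mulr1; apply: eq_ev2 => z w; by rewrite !mul1r.
have L2 : forall x y, ev2 (fun x0 => B (1 * x) x0) (T1 D (tpure2 (1 * y) 1)) =
  ev2 (fun x0 => B x x0) (D y).
  move=> x y; rewrite ev2_T1 ev2_pure !mul1r; apply: eq_ev2 => z w; by rewrite !mulr1.
by rewrite (eq_ev2 _ L1) (eq_ev2 _ L2).
Qed.

Lemma wm_unit1 : teq3 (DeltaId D (D 1)) (tmul3 (tleft1 (D 1)) (tright1 (D 1))).
Proof.
apply: teq3_trans (DeltaId_congr (wm_Dlin H) (teq2_sym E_D1)) _.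
apply: teq3_trans (teq3_sym (wm_E3 H)) _.
apply: teq3_trans (teq3_sym (wm_E3l H)) _.
exact: lr_congr E_D1 E_D1.
Qed.
Lemma wm_unit2 : teq3 (DeltaId D (D 1)) (tmul3 (tright1 (D 1)) (tleft1 (D 1))).
Proof.
apply: teq3_trans (DeltaId_congr (wm_Dlin H) (teq2_sym E_D1)) _.
apply: teq3_trans (teq3_sym (wm_E3 H)) _.
apply: teq3_trans (teq3_sym (wm_E3r H)) _.
exact: rl_congr E_D1 E_D1.
Qed.

Let He := wm_elin H.

Lemma wmF1 a z : ev2 (fun x y => e (a * x) *: (y * z)) E =
  ev2 (fun x y => e (a * x) *: y) (D z).
Proof.
have h := wm_eps2 H a 1 z.
change (ev2 (fun x y => e x *: y) (tmul2 (tmul2 (tpure2 a 1) E) (tpure2 1 z)) =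
        ev2 (fun x y => e x *: y) (tmul2 (tpure2 a 1) (D z))) in h.
rewrite ev2_pr ev2_pl ev2_pl in h.
transitivity (ev2 (fun x y => e (a * x * 1) *: (1 * y * z)) E).
  by apply: eq_ev2 => x y; rewrite mulr1 mul1r.
by rewrite h; apply: eq_ev2 => x y; rewrite mul1r.
Qed.

Lemma wmG a z : \sum_(w <- E) e (a * w.1) * e (w.2 * z) = e (a * z).
Proof.
have := congr1 e (wmF1 a z).
rewrite (phi_ev2 He (fun x y => e (a * x)) (fun x y => y * z) _).
rewrite (phi_ev2 He (fun x y => e (a * x)) (fun x y => y) _) => ->.
rewrite -{2}(wm_cr z) /idEps mulr_sumr (e_sum He); apply: eq_bigr => p _.
by rewrite -scalerAr (eZ He) mulrC.
Qed.

Lemma wm_counit1 a b c : e (a * b * c) =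
  epsEps e (tmul2 (tmul2 (tpure2 a 1) (D b)) (tpure2 1 c)).
Proof.
rewrite epsEps_3.
have := congr1 (fun u => e (u * c)) (wmF1 a b).
rewrite /= (phi_ev2 (ls_mulr c He) (fun x y => e (a * x)) (fun x y => y * b) _).
rewrite (phi_ev2 (ls_mulr c He) (fun x y => e (a * x)) (fun x y => y) _) /=.
under eq_bigr do rewrite -mulrA.
rewrite wmG mulrA => ->; apply: eq_bigr => p _; by rewrite mulr1 mul1r.
Qed.

Lemma wmF1' x c : ev2 (fun u v => e (u * c) *: (x * v)) E =
  ev2 (fun u v => e (u * c) *: v) (D x).
Proof.
have h := wm_eps1 H x c 1.
change (ev2 (fun x y => e x *: y) (tmul2 (tmul2 (tpure2 1 x) E) (tpure2 c 1)) =
        ev2 (fun x y => e x *: y) (tmul2 (D x) (tpure2 c 1))) in h.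
rewrite ev2_pr ev2_pl ev2_pr in h.
transitivity (ev2 (fun u v => e (1 * u * c) *: (x * v * 1)) E).
  by apply: eq_ev2 => u v; rewrite mulr1 mul1r.
by rewrite h; apply: eq_ev2 => u v; rewrite mulr1.
Qed.

Lemma wmG' x c : \sum_(w <- E) e (w.1 * c) * e (x * w.2) = e (x * c).
Proof.
have := congr1 e (wmF1' x c).
rewrite (phi_ev2 He (fun u v => e (u * c)) (fun u v => x * v) _).
rewrite (phi_ev2 He (fun u v => e (u * c)) (fun u v => v) _) => ->.
rewrite -{2}(wm_cr x) /idEps mulr_suml (e_sum He); apply: eq_bigr => p _.
by rewrite -scalerAl (eZ He) mulrC.
Qed.

Lemma wm_counit2 a b c : e (a * b * c) =
  epsEps e (tmul2 (tmul2 (tpure2 a 1) (ttw (D b))) (tpure2 1 c)).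
Proof.
rewrite epsEps_3 /ttw big_map.
have := congr1 (fun u => e (a * u)) (wmF1' b c).
rewrite /= (phi_ev2 (ls_mull a He) (fun u v => e (u * c)) (fun u v => b * v) _).
rewrite (phi_ev2 (ls_mull a He) (fun u v => e (u * c)) (fun u v => v) _) /=.
under eq_bigr do rewrite mulrA.
rewrite wmG' => ->; apply: eq_bigr => p _ /=; by rewrite mulr1 mul1r mulrC.
Qed.

Lemma wm_to_wb : is_weak_bialgebra D e.
Proof.
split.
- exact: wm_Dlin H.
- exact: wm_elin H.
- exact: wm_coassoc.
- exact: wm_cl.
- exact: wm_cr.
- exact: wm_Dmult H.
- exact: wm_unit1.
- exact: wm_unit2.
- exact: wm_counit1.
- exact: wm_counit2.
Qed.
End WMtoWB.

Section WBtoWM.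
Variables (E : tens2 A) (D : A -> tens2 A) (e : A -> k).
Hypothesis HW : is_weak_bialgebra D e.
Hypothesis HE : teq2 E (D 1).
Let He := wb_elin HW.
Let HD := wb_Dlin HW.

Lemma bil_eps' : bilinear2 (fun x y : A => e x *: y).
Proof. exact: bil_eps He. Qed.

Lemma wb_epsD a : ev2 (fun x y => e x *: y) (D a) = a.
Proof. exact: wb_counitl HW a. Qed.

Lemma wbK a c : ev2 (fun x y => e (a * x) *: (y * c)) (D 1) =
  ev2 (fun x y => e (a * x) *: y) (D c).
Proof.
pose H3 := fun u v w => e (a * u) *: ev2 (fun p q => e (v * p) *: (w * q)) (D c).
have tH : trilinear3 H3.
  apply: tri_of_lin => [x y|x z|y z].
  - apply: lin_scale; apply: lin_sum => p; apply: lin_scale; exact: lin_mulr.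
  - apply: lin_scale; apply: lin_sum => p; apply: lin_scal_fun; exact: ls_mulr.
  - by apply: lin_scal_fun; apply: ls_mull.
transitivity (ev3 H3 (IdDelta D (D 1))).
  rewrite ev3_IdDelta; apply: eq_ev2 => y1 y2.
  rewrite /H3 /ev2 -scaler_sumr; congr (_ *: _).
  rewrite -{1}(wb_epsD (y2 * c)) (teq2E (wb_mult HW y2 c) bil_eps') ev2_tmul2.
  by [].
rewrite -(teq3E (wb_coassoc HW 1) tH) (teq3E (wb_unit1 HW) tH) ev3_lr.
symmetry.
transitivity (ev2 (fun x y => (\sum_(w <- D 1) e (a * w.1) * e (w.2 * x)) *: y) (D c)).
  apply: eq_ev2 => x y; congr (_ *: _).
  rewrite -{1}(mulr1 a) (wb_counit1 HW a 1 x) epsEps_3; apply: eq_bigr => w _.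
  by rewrite mulr1 mul1r.
transitivity (\sum_(w <- D 1) e (a * w.1) *: ev2 (fun x y => e (w.2 * x) *: y) (D c)).
  rewrite /ev2; under eq_bigr do rewrite scaler_suml.
  rewrite exchange_big; apply: eq_bigr => w _; rewrite scaler_sumr.
  by apply: eq_bigr => p _; rewrite scalerA.
apply: eq_bigr => w _.
have := wb_mult HW 1 c; rewrite mul1r => hm.
rewrite (teq2E hm (bil_comp bil_eps' (lin_mull w.2) (@lin_id k A))) ev2_tmul2 /H3 /ev2 scaler_sumr.
apply: eq_bigr => v _; rewrite mulr1 mul1r; congr (_ *: _).
by apply: eq_bigr => p _; rewrite mulrA.
Qed.

Lemma wbK' a b : ev2 (fun x y => e (x * b) *: (a * y)) (D 1) =
  ev2 (fun x y => e (x * b) *: y) (D a).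
Proof.
pose H3 := fun u v w => e (u * b) *: ev2 (fun p q => e (p * v) *: (q * w)) (D a).
have tH : trilinear3 H3.
  apply: tri_of_lin => [x y|x z|y z].
  - apply: lin_scale; apply: lin_sum => p; apply: lin_scale; exact: lin_mull.
  - apply: lin_scale; apply: lin_sum => p; apply: lin_scal_fun; exact: ls_mull.
  - by apply: lin_scal_fun; apply: ls_mulr.
transitivity (ev3 H3 (IdDelta D (D 1))).
  rewrite ev3_IdDelta; apply: eq_ev2 => y1 y2.
  rewrite /H3 /ev2 -scaler_sumr; congr (_ *: _).
  rewrite -{1}(wb_epsD (a * y2)) (teq2E (wb_mult HW a y2) bil_eps') ev2_tmul2.
  by rewrite exchange_big.
rewrite -(teq3E (wb_coassoc HW 1) tH) (teq3E (wb_unit2 HW) tH) ev3_rl.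
symmetry.
transitivity (ev2 (fun x y => (\sum_(w <- D 1) e (w.1 * b) * e (x * w.2)) *: y) (D a)).
  apply: eq_ev2 => x y; congr (_ *: _).
  rewrite -{1}(mulr1 x) (wb_counit2 HW x 1 b) epsEps_3 /ttw big_map; apply: eq_bigr => w _.
  by rewrite /= mulr1 mul1r mulrC.
transitivity (\sum_(w <- D 1) e (w.1 * b) *: ev2 (fun x y => e (x * w.2) *: y) (D a)).
  rewrite /ev2; under eq_bigr do rewrite scaler_suml.
  rewrite exchange_big; apply: eq_bigr => w _; rewrite scaler_sumr.
  by apply: eq_bigr => p _; rewrite scalerA.
rewrite [RHS]/ev2 exchange_big; apply: eq_bigr => y _.
have := wb_mult HW a 1; rewrite mulr1 => hm.
rewrite (teq2E hm (bil_comp bil_eps' (lin_mulr y.2) (@lin_id k A))) ev2_tmul2 /H3 /ev2 mul1r.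
transitivity (\sum_(x <- D a) \sum_(w <- D 1)
   e (y.1 * b) *: (e (x.1 * w.1 * y.2) *: (x.2 * w.2))).
  by rewrite scaler_sumr; apply: eq_bigr => x _; rewrite scaler_sumr.
rewrite exchange_big; apply: eq_bigr => w _.
rewrite scaler_sumr; apply: eq_bigr => x _; by rewrite mulr1 mulrA.
Qed.

Lemma mul_ev2 (g : A -> k) (f : A -> A) b0 s :
  b0 * ev2 (fun x y => g x *: f y) s = ev2 (fun x y => g x *: (b0 * f y)) s.
Proof. by rewrite /ev2 mulr_sumr; apply: eq_bigr => p _; rewrite scalerAr. Qed.
Lemma ev2_mul (g : A -> k) (f : A -> A) c s :
  ev2 (fun x y => g x *: f y) s * c = ev2 (fun x y => g x *: (f y * c)) s.
Proof. by rewrite /ev2 mulr_suml; apply: eq_bigr => p _; rewrite scalerAl. Qed.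

Lemma wb_eps2 a b c :
  epsId e (tmul2 (tmul2 (tpure2 a b) E) (tpure2 1 c)) =
  epsId e (tmul2 (tpure2 a b) (D c)).
Proof.
change (ev2 (fun x y => e x *: y) (tmul2 (tmul2 (tpure2 a b) E) (tpure2 1 c)) =
        ev2 (fun x y => e x *: y) (tmul2 (tpure2 a b) (D c))).
rewrite ev2_pr ev2_pl ev2_pl.
rewrite (teq2E HE (bil_comp bil_eps'
   (lin_comp (f := fun u => u * 1) (g := fun v => a * v) (lin_mulr 1) (lin_mull a))
   (lin_comp (f := fun u => u * c) (g := fun v => b * v) (lin_mulr c) (lin_mull b)))).
transitivity (b * ev2 (fun x y => e (a * x) *: (y * c)) (D 1)).
  by rewrite mul_ev2; apply: eq_ev2 => x y; rewrite mulr1 mulrA.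
by rewrite wbK mul_ev2.
Qed.

Lemma wb_eps1 a b c :
  epsId e (tmul2 (tmul2 (tpure2 1 a) E) (tpure2 b c)) =
  epsId e (tmul2 (D a) (tpure2 b c)).
Proof.
change (ev2 (fun x y => e x *: y) (tmul2 (tmul2 (tpure2 1 a) E) (tpure2 b c)) =
        ev2 (fun x y => e x *: y) (tmul2 (D a) (tpure2 b c))).
rewrite ev2_pr ev2_pl ev2_pr.
rewrite (teq2E HE (bil_comp bil_eps'
   (lin_comp (f := fun u => u * b) (g := fun v => 1 * v) (lin_mulr b) (lin_mull 1))
   (lin_comp (f := fun u => u * c) (g := fun v => a * v) (lin_mulr c) (lin_mull a)))).
transitivity (ev2 (fun x y => e (x * b) *: (a * y)) (D 1) * c).
  by rewrite ev2_mul; apply: eq_ev2 => x y; rewrite mul1r.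
by rewrite wbK' ev2_mul.
Qed.

Lemma absorbE_l a : teq2 (tmul2 E (D a)) (D a).
Proof.
apply: teq2_trans (tmul2_congr HE (teq2_refl _)) _.
by have := wb_mult HW 1 a; rewrite mul1r => h; exact: teq2_sym h.
Qed.
Lemma absorbE_r a : teq2 (tmul2 (D a) E) (D a).
Proof.
apply: teq2_trans (tmul2_congr (teq2_refl _) HE) _.
by have := wb_mult HW a 1; rewrite mulr1 => h; exact: teq2_sym h.
Qed.

Lemma wb_span_l t :
  inspan2 (fun x : A * A * A => tmul2 (D x.1.1) (tpure2 x.1.2 x.2)) t <->
  inspan2 (fun x : A * A => tmul2 E (tpure2 x.1 x.2)) t.
Proof.
split.
  move=> [l Hl].
  exists (flatten [seq [seq (q.1, (x.1 * q.2.1.2, x.2 * q.2.2)) | x <- D q.2.1.1] | q <- l]).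
  apply: teq2_trans Hl _; apply: teq2I => U B HB.
  rewrite (@ev2_span _ _ _ (fun x : A * A * A => tmul2 (D x.1.1) (tpure2 x.1.2 x.2)) _ HB) (@ev2_span _ _ _ (fun x : A * A => tmul2 E (tpure2 x.1 x.2)) _ HB) big_flatten big_map; apply: eq_bigr => -[c [[a b] b']] _ /=.
  rewrite big_map -scaler_sumr; congr (_ *: _).
  rewrite ev2_pr -(teq2E (absorbE_l a) (bil_comp HB (lin_mulr b) (lin_mulr b'))).
  rewrite ev2_tmul2 exchange_big; apply: eq_bigr => x _; rewrite ev2_pr.
  by apply: eq_bigr => w _; rewrite !mulrA.
move=> [l Hl]; exists [seq (q.1, (1, q.2.1, q.2.2)) | q <- l].
apply: teq2_trans Hl _; apply: teq2I => U B HB.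
rewrite (@ev2_span _ _ _ (fun x : A * A * A => tmul2 (D x.1.1) (tpure2 x.1.2 x.2)) _ HB) (@ev2_span _ _ _ (fun x : A * A => tmul2 E (tpure2 x.1 x.2)) _ HB) big_map; apply: eq_bigr => q _ /=; congr (_ *: _).
exact: (teq2E (tmul2_congr HE (teq2_refl _)) HB).
Qed.

Lemma wb_span_r t :
  inspan2 (fun x : A * A * A => tmul2 (tpure2 x.1.2 x.2) (D x.1.1)) t <->
  inspan2 (fun x : A * A => tmul2 (tpure2 x.1 x.2) E) t.
Proof.
split.
  move=> [l Hl].
  exists (flatten [seq [seq (q.1, (q.2.1.2 * x.1, q.2.2 * x.2)) | x <- D q.2.1.1] | q <- l]).
  apply: teq2_trans Hl _; apply: teq2I => U B HB.
  rewrite (@ev2_span _ _ _ (fun x : A * A * A => tmul2 (tpure2 x.1.2 x.2) (D x.1.1)) _ HB) (@ev2_span _ _ _ (fun x : A * A => tmul2 (tpure2 x.1 x.2) E) _ HB) big_flatten big_map; apply: eq_bigr => -[c [[a b] b']] _ /=.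
  rewrite big_map -scaler_sumr; congr (_ *: _).
  rewrite ev2_pl -(teq2E (absorbE_r a) (bil_comp HB (lin_mull b) (lin_mull b'))).
  rewrite ev2_tmul2; apply: eq_bigr => x _; rewrite ev2_pl.
  by apply: eq_bigr => w _; rewrite !mulrA.
move=> [l Hl]; exists [seq (q.1, (1, q.2.1, q.2.2)) | q <- l].
apply: teq2_trans Hl _; apply: teq2I => U B HB.
rewrite (@ev2_span _ _ _ (fun x : A * A * A => tmul2 (tpure2 x.1.2 x.2) (D x.1.1)) _ HB) (@ev2_span _ _ _ (fun x : A * A => tmul2 (tpure2 x.1 x.2) E) _ HB) big_map; apply: eq_bigr => q _ /=; congr (_ *: _).
exact: (teq2E (tmul2_congr (teq2_refl _) HE) HB).
Qed.

Lemma wb_T (t : tens3 A) : teq3 (T2id D (idT1 D t)) (idT1 D (T2id D t)).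
Proof.
apply: teq3I => U B HB.
rewrite ev3_T2id ev3_idT1 ev3_idT1 ev3_T2id; apply: eq_ev3 => u v w.
pose C := fun x y z => B (u * x) y (z * w).
have tC : trilinear3 C.
  apply: (tri_comp (f := fun x => u * x) (g := fun y : A => y) (h := fun z => z * w)) => //; [exact: lin_mull | exact: lin_mulr].
transitivity (ev3 C (DeltaId D (D v))).
  rewrite ev2_T1 ev2_pure ev3_DeltaId; apply: eq_ev2 => x y.
  rewrite ev2_T2 ev2_pure mulr1; apply: eq_ev2 => x' y'; by rewrite mul1r.
rewrite (teq3E (wb_coassoc HW v) tC) ev3_IdDelta.
rewrite ev2_T2 ev2_pure; apply: eq_ev2 => x y.
rewrite ev2_T1 ev2_pure mul1r; apply: eq_ev2 => x' y'; by rewrite mulr1.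
Qed.

Lemma wb_to_wm : is_weak_multiplier_bialgebra E D e.
Proof.
split.
- by move=> a; exists (tpure2 a 1); rewrite /tmu big_seq1 mulr1.
- by move=> b h; rewrite -(mul1r b) h.
- by move=> b h; rewrite -(mulr1 b) h.
- apply: teq2_trans (tmul2_congr HE HE) _.
  have := wb_mult HW 1 1; rewrite mulr1 => h; exact: teq2_trans (teq2_sym h) (teq2_sym HE).
- exact: wb_Dlin HW.
- exact: wb_mult HW.
- exact: wb_elin HW.
- exact: wb_T.
- move=> s; change (ev2 (fun x y => e x *: y) (T1 D s) = tmu s).
  rewrite ev2_T1 /ev2 /tmu; apply: eq_bigr => p _.
  rewrite -{2}(wb_counitl HW p.1) /epsId mulr_suml; apply: eq_bigr => x _.
  by rewrite mulr1 scalerAl.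
- move=> s; change (ev2 (fun x y => e y *: x) (T2 D s) = tmu s).
  rewrite ev2_T2 /ev2 /tmu; apply: eq_bigr => p _.
  rewrite -{2}(wb_counitr HW p.2) /idEps mulr_sumr; apply: eq_bigr => x _.
  by rewrite mul1r scalerAr.
- exact: wb_span_l.
- exact: wb_span_r.
- apply: teq3_trans (IdDelta_congr HD HE) _.
  apply: teq3_trans (teq3_sym (wb_coassoc HW 1)) _.
  exact (DeltaId_congr HD (teq2_sym HE)).
- apply: teq3_trans (lr_congr HE HE) _.
  apply: teq3_trans (teq3_sym (wb_unit1 HW)) _.
  apply: teq3_trans (wb_coassoc HW 1) _.
  exact (IdDelta_congr HD (teq2_sym HE)).
- apply: teq3_trans (rl_congr HE HE) _.
  apply: teq3_trans (teq3_sym (wb_unit2 HW)) _.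
  apply: teq3_trans (wb_coassoc HW 1) _.
  exact (IdDelta_congr HD (teq2_sym HE)).
- exact: wb_eps1.
- exact: wb_eps2.
Qed.

End WBtoWM.
End Main.

Unset Implicit Arguments.

Theorem theorem2p10 (k : fieldType) (A : algType k)
    (E : tens2 A) (D : A -> tens2 A) (e : A -> k) :
  is_weak_multiplier_bialgebra E D e <->
  (is_weak_bialgebra D e /\ teq2 E (D 1)).
Proof.
split.
  by move=> H; split; [exact: wm_to_wb H | exact: E_D1 H].
by move=> [HW HE]; exact: wb_to_wm HW HE.
Qed.
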